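(* The cartesian product induces an injective ring homomorphism $$\mathrm{B}(\mathbb{Z})\otimes\mathrm{B}(\mathcal{Q})\longrightarrow\mathrm{B}(\mathcal{R}),\qquad [(X,\pi)]\otimes b(Q)\longmapsto b((X,\pi)\times Q),$$ where $(X,\pi)$ is regarded as a permutation rack.
   Context: A rack is a set $R$ with a binary operation $\rhd$ such that every left multiplication $\ell_a\colon b\mapsto a\rhd b$ is a bijection and $a\rhd(b\rhd c)=(a\rhd b)\rhd(a\rhd c)$ for all $a,b,c$; a quandle is a rack with $a\rhd a=a$ for all $a$. A permutation rack $(X,\pi)$ is a set $X$ with permutation $\pi$ and $a\rhd b=\pi(b)$. Products of racks are cartesian products with componentwise operation. A subrack is a subset $S$ with $\ell_s(S)=S$ for all $s\in S$; a decomposition of $R$ into $S$ and $T$ means $S,T$ are disjoint subracks (possibly empty) with $S\cup T=R$. The Burnside ring of finite racks $\mathrm{B}(\mathcal{R})$ is the abelian group generated by symbols $b(R)$, one for each finite rack $R$, subject to $b(R_1)=b(R_2)$ whenever $R_1\cong R_2$ and $b(R)=b(S)+b(T)$ whenever $R$ decomposes into $S$ and $T$, with ring structure $b(R)b(R')=b(R\times R')$; the Burnside ring of finite quandles $\mathrm{B}(\mathcal{Q})$ is defined in the same way using finite quandles. $\mathrm{B}(\mathbb{Z})$ is the Grothendieck ring of isomorphism classes of pairs $(X,\pi)$, $X$ a finite set and $\pi$ a permutation of $X$, with addition from disjoint union and multiplication from cartesian product. *)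

(* Defs.v *)
From mathcomp Require Import all_boot all_algebra all_fingroup.
Set Implicit Arguments. Unset Strict Implicit. Unset Printing Implicit Defensive.
Import GRing.Theory.
Local Open Scope ring_scope.

(* Generic Grothendieck-group machinery: formal Z-combinations of      *)
(* generators (lists of (coefficient, generator)) modulo the subgroup  *)
(* generated by a family of relation combinations.                     *)

Definition coef (G : eqType) (s : seq (int * G)) (g : G) : int :=
  \sum_(p <- s | p.2 == g) p.1.

Inductive zspan (G : eqType) (Rel : seq (int * G) -> Prop) : (G -> int) -> Prop :=
| zspan0 : zspan Rel (fun _ => 0)
| zspan_rel s : Rel s -> zspan Rel (coef s)
| zspan_add f g : zspan Rel f -> zspan Rel g -> zspan Rel (fun x => f x + g x)
| zspan_opp f : zspan Rel f -> zspan Rel (fun x => - f x)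
| zspan_ext f g : zspan Rel f -> (forall x, f x = g x) -> zspan Rel g.

Definition eqB (G : eqType) (Rel : seq (int * G) -> Prop) (s t : seq (int * G)) : Prop :=
  zspan Rel (fun g => coef s g - coef t g).

Definition fmul (G : Type) (mul : G -> G -> G) (s t : seq (int * G)) : seq (int * G) :=
  [seq (p.1 * q.1, mul p.2 q.2) | p <- s, q <- t].

(* Finite magmas (carrier 'I_n); racks and quandles.                   *)
(* Every finite rack is isomorphic to one of these.                    *)

Definition magma := {n : nat & {ffun 'I_n -> {ffun 'I_n -> 'I_n}}}.

Definition mop (M : magma) (a b : 'I_(tag M)) : 'I_(tag M) := tagged M a b.
Arguments mop : clear implicits.

Definition is_rack (M : magma) : Prop :=
  (forall a, bijective (mop M a)) /\
  (forall a b c, mop M a (mop M b c) = mop M (mop M a b) (mop M a c)).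

Definition is_quandle (M : magma) : Prop :=
  is_rack M /\ (forall a, mop M a a = a).

Definition miso (M N : magma) : Prop :=
  exists f : 'I_(tag M) -> 'I_(tag N),
    bijective f /\ forall a b, f (mop M a b) = mop N (f a) (f b).

Definition subrack (M : magma) (S : {set 'I_(tag M)}) : Prop :=
  forall s, s \in S -> [set mop M s x | x in S] = S.

Definition membeds_onto (N M : magma) (S : {set 'I_(tag M)}) : Prop :=
  exists f : 'I_(tag N) -> 'I_(tag M),
    injective f /\ [set f x | x in 'I_(tag N)] = S /\
    forall a b, f (mop N a b) = mop M (f a) (f b).

Definition mdecomp (M N1 N2 : magma) : Prop :=
  exists S T : {set 'I_(tag M)},
    [/\ subrack S, subrack T, [disjoint S & T], S :|: T = setT &
        membeds_onto N1 S /\ membeds_onto N2 T].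

(* defining relations of B(R) (resp. B(Q) when restricted to quandles) *)
Definition RelB (P : magma -> Prop) (s : seq (int * magma)) : Prop :=
  (exists R1 R2, [/\ P R1, P R2, miso R1 R2 & s = [:: (1, R1); (-1, R2)]]) \/
  (exists R S T, [/\ P R, mdecomp R S T & s = [:: (1, R); (-1, S); (-1, T)]]).

Definition RackRel := RelB is_rack.
Definition QuandleRel := RelB is_quandle.

Lemma card_ord_prod m n : #|{: 'I_m * 'I_n}| = (m * n)%N.
Proof. by rewrite card_prod !card_ord. Qed.

Definition pidx m n (p : 'I_m * 'I_n) : 'I_(m * n) :=
  cast_ord (card_ord_prod m n) (enum_rank p).
Definition punidx m n (i : 'I_(m * n)) : 'I_m * 'I_n :=
  enum_val (cast_ord (esym (card_ord_prod m n)) i).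

Definition mprod (M N : magma) : magma :=
  existT _ (tag M * tag N)%N
    [ffun i => [ffun j =>
       pidx (mop M (punidx i).1 (punidx j).1, mop N (punidx i).2 (punidx j).2)]].

Definition mpoint : magma := existT _ 1%N [ffun _ => [ffun _ => ord0]].

(* Finite sets with a permutation: B(Z).                               *)

Definition permset := {n : nat & {perm 'I_n}}.

Definition piso (X Y : permset) : Prop :=
  exists f : 'I_(tag X) -> 'I_(tag Y),
    bijective f /\ forall a, f (tagged X a) = tagged Y (f a).

Definition pembeds_onto (Y X : permset) (S : {set 'I_(tag X)}) : Prop :=
  exists f : 'I_(tag Y) -> 'I_(tag X),
    injective f /\ [set f x | x in 'I_(tag Y)] = S /\
    forall a, f (tagged Y a) = tagged X (f a).

Definition pdecomp (X Y Z : permset) : Prop :=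
  exists S T : {set 'I_(tag X)},
    [/\ [set tagged X x | x in S] = S, [set tagged X x | x in T] = T,
        [disjoint S & T] & S :|: T = setT /\
        pembeds_onto Y S /\ pembeds_onto Z T].

Definition PermRel (s : seq (int * permset)) : Prop :=
  (exists X Y, piso X Y /\ s = [:: (1, X); (-1, Y)]) \/
  (exists X Y Z, pdecomp X Y Z /\ s = [:: (1, X); (-1, Y); (-1, Z)]).

Lemma pprod_inj m n (p : {perm 'I_m}) (q : {perm 'I_n}) :
  injective (fun i : 'I_(m * n) => pidx (p (punidx i).1, q (punidx i).2)).
Proof.
move=> i j /= /(congr1 val) /=; move/val_inj/enum_rank_inj => [] /perm_inj e1 /perm_inj e2.
have : punidx i = punidx j by rewrite [punidx i]surjective_pairing e1 e2 -surjective_pairing.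
rewrite /punidx => /enum_val_inj /(congr1 val) /= /val_inj; done.
Qed.

Definition pprod (X Y : permset) : permset :=
  existT _ (tag X * tag Y)%N (perm (@pprod_inj _ _ (tagged X) (tagged Y))).

Definition ppoint : permset := existT _ 1%N (1%g : {perm 'I_1}).

Definition permrack (X : permset) : magma :=
  existT _ (tag X) [ffun _ => [ffun b => tagged X b]].

(* B(Z) (x) B(Q) as the free abelian group on pairs of generators      *)
(* modulo (relations of B(Z)) (x) generators + generators (x) (rel. of *)
(* B(Q)); its ring product is (X (x) Q)(X' (x) Q') = (XxX') (x) (QxQ').*)

Definition TensorRel (s : seq (int * (permset * magma))) : Prop :=
  (exists r Q, PermRel r /\ is_quandle Q /\ s = [seq (p.1, (p.2, Q)) | p <- r]) \/
  (exists X r, QuandleRel r /\ s = [seq (p.1, (X, p.2)) | p <- r]).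

Definition tprod (u v : permset * magma) : permset * magma :=
  (pprod u.1 v.1, mprod u.2 v.2).

Definition phi (s : seq (int * (permset * magma))) : seq (int * magma) :=
  [seq (p.1, mprod (permrack p.2.1) p.2.2) | p <- s].

Definition tensor_gens (s : seq (int * (permset * magma))) : Prop :=
  forall p, p \in s -> is_quandle p.2.2.

(* Main.v *)
Require Import Defs.
From mathcomp Require Import all_boot all_algebra all_fingroup.
From mathcomp.algebra_tactics Require Import ring.
From mathcomp.zify Require Import zify.
Require Import Defs.
Set Implicit Arguments. Unset Strict Implicit. Unset Printing Implicit Defensive.
Import GRing.Theory.
Local Open Scope ring_scope.

Section Frame.
Variables (G H : eqType).

Definition scl (c : int) (u : seq (int * H)) : seq (int * H) :=
  [seq (c * q.1, q.2) | q <- u].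
Definition lin (F : G -> seq (int * H)) (u : seq (int * G)) : seq (int * H) :=
  flatten [seq scl p.1 (F p.2) | p <- u].

Lemma coef_nil (g : H) : coef [::] g = 0.
Proof. by rewrite /coef big_nil. Qed.

Lemma coef_cons (p : int * H) u g :
  coef (p :: u) g = (if p.2 == g then p.1 else 0) + coef u g.
Proof. by rewrite /coef big_cons; case: ifP; rewrite ?add0r. Qed.

Lemma coef_cat (u v : seq (int * H)) g : coef (u ++ v) g = coef u g + coef v g.
Proof. by rewrite /coef big_cat. Qed.

Lemma coef_scl c u g : coef (scl c u) g = c * coef u g.
Proof.
elim: u => [|p u IH]; first by rewrite /scl /= !coef_nil mulr0.
by rewrite /= !coef_cons IH /= mulrDr; case: ifP => _; rewrite ?mulr0.
Qed.

Lemma coef_lin F (u : seq (int * G)) h :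
  coef (lin F u) h = \sum_(p <- u) p.1 * coef (F p.2) h.
Proof.
elim: u => [|p u IH]; first by rewrite /lin /= coef_nil big_nil.
by rewrite /lin /= coef_cat coef_scl -/(lin F u) IH big_cons.
Qed.

Lemma lin_cat F (u v : seq (int * G)) : lin F (u ++ v) = lin F u ++ lin F v.
Proof. by rewrite /lin map_cat flatten_cat. Qed.

End Frame.

Lemma sum_coef (G : eqType) (w : seq (int * G)) (F : G -> int) :
  \sum_(p <- w) p.1 * F p.2 = \sum_(g <- undup [seq p.2 | p <- w]) coef w g * F g.
Proof.
rewrite /coef.
transitivity (\sum_(g <- undup [seq p.2 | p <- w]) \sum_(p <- w | p.2 == g) p.1 * F p.2); last first.
  apply: eq_bigr => g _; rewrite mulr_suml; apply: eq_bigr => p /eqP -> //.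
rewrite (exchange_big_dep xpredT) //=.
apply: eq_big_seq => p Hp.
rewrite (eq_bigl (fun g => g == p.2)); last by move=> g; rewrite eq_sym.
have Hin : p.2 \in undup [seq p.2 | p <- w].
  by rewrite mem_undup; exact: (map_f (fun q : int * G => q.2)).
rewrite (big_rem _ Hin) eqxx big1_seq /=; first by rewrite addr0.
move=> g /andP [/eqP -> Hg].
by move: Hg; rewrite mem_rem_uniq ?undup_uniq // inE eqxx.
Qed.


Section Z.
Variables (G : eqType) (Rel : seq (int * G) -> Prop).

Lemma zspan_nat (n : nat) f : zspan Rel f -> zspan Rel (fun x => n%:Z * f x).
Proof.
move=> Hf; elim: n => [|n IH].
  by apply: zspan_ext (zspan0 Rel) _ => x; rewrite mul0r.
apply: zspan_ext (zspan_add Hf IH) _ => x.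
by rewrite -[in RHS](addn1 n) PoszD mulrDl mul1r addrC.
Qed.

Lemma zspan_scale (c : int) f : zspan Rel f -> zspan Rel (fun x => c * f x).
Proof.
move=> Hf; case: c => n; first exact: zspan_nat.
apply: zspan_ext (zspan_opp (zspan_nat n.+1 Hf)) _ => x.
by rewrite NegzE mulNr.
Qed.

Lemma eqB_refl s : eqB Rel s s.
Proof. by apply: zspan_ext (zspan0 Rel) _ => x; rewrite subrr. Qed.

Lemma eqB_sym s t : eqB Rel s t -> eqB Rel t s.
Proof. by move=> H; apply: zspan_ext (zspan_opp H) _ => x; rewrite opprB. Qed.

Lemma eqB_trans s t u : eqB Rel s t -> eqB Rel t u -> eqB Rel s u.
Proof. by move=> H1 H2; apply: zspan_ext (zspan_add H1 H2) _ => x; ring. Qed.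

Lemma eqB_ext s s' t t' : coef s =1 coef s' -> coef t =1 coef t' ->
  eqB Rel s t -> eqB Rel s' t'.
Proof. by move=> Hs Ht H; apply: zspan_ext H _ => x; rewrite Hs Ht. Qed.

Lemma eqB_cat s t s' t' : eqB Rel s t -> eqB Rel s' t' -> eqB Rel (s ++ s') (t ++ t').
Proof.
by move=> H1 H2; apply: zspan_ext (zspan_add H1 H2) _ => x; rewrite !coef_cat; ring.
Qed.

Lemma eqB_scl c s t : eqB Rel s t -> eqB Rel (scl c s) (scl c t).
Proof.
by move=> H; apply: zspan_ext (zspan_scale c H) _ => x; rewrite !coef_scl; ring.
Qed.

Lemma eqB_rel r : Rel r -> eqB Rel r [::].
Proof. by move=> H; apply: zspan_ext (zspan_rel H) _ => x; rewrite coef_nil subr0. Qed.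

End Z.

Lemma sum_scl (G : eqType) c (u : seq (int * G)) (P : G -> int) :
  \sum_(p <- scl c u) p.1 * P p.2 = c * \sum_(p <- u) p.1 * P p.2.
Proof.
by rewrite /scl big_map mulr_sumr; apply: eq_bigr => p _ /=; rewrite mulrA.
Qed.

Lemma sum_coef0 (G : eqType) (w : seq (int * G)) (P : G -> int) :
  (forall g, coef w g = 0) -> \sum_(p <- w) p.1 * P p.2 = 0.
Proof. by move=> H; rewrite sum_coef big1 // => g _; rewrite H mul0r. Qed.

Lemma lin_scl (G H : eqType) (F : G -> seq (int * H)) c u :
  coef (lin F (scl c u)) =1 coef (scl c (lin F u)).
Proof. by move=> h; rewrite coef_scl !coef_lin (sum_scl c u (fun g => coef (F g) h)). Qed.

Lemma helper1 (a b c : int) : a + (-1 * b + c) = 0 -> a = b - c.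
Proof.
move=> E; have -> : a = a + (-1 * b + c) + (b - c) by ring.
by rewrite E add0r.
Qed.

Lemma transfer (G H : eqType) (R1 : seq (int * G) -> Prop)
    (R2 : seq (int * H) -> Prop) (F : G -> seq (int * H)) :
  (forall r, R1 r -> eqB R2 (lin F r) [::]) ->
  forall s t, eqB R1 s t -> eqB R2 (lin F s) (lin F t).
Proof.
move=> HR s t.
have key : forall f, zspan R1 f ->
    exists u, (forall g, coef u g = f g) /\ eqB R2 (lin F u) [::].
  move=> f; elim => {f}.
  - exists [::]; split => [g|]; [exact: coef_nil | exact: eqB_refl].
  - by move=> r Hr; exists r; split => //; apply: HR.
  - move=> f g _ [u [Hu Hl]] _ [v [Hv Hl']]; exists (u ++ v); split.
      by move=> x; rewrite coef_cat Hu Hv.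
    by rewrite lin_cat; apply: (eqB_cat Hl Hl').
  - move=> f _ [u [Hu Hl]]; exists (scl (-1) u); split.
      by move=> x; rewrite coef_scl Hu mulN1r.
    apply: eqB_ext (eqB_scl (-1) Hl) => x //; first by rewrite lin_scl.
  - by move=> f g _ [u [Hu Hl]] Hfg; exists u; split => // x; rewrite Hu.
case/key => u [Hu Hl].
apply: zspan_ext Hl _ => h.
rewrite coef_nil subr0 !coef_lin.
have := @sum_coef0 _ (u ++ scl (-1) s ++ t) (fun g => coef (F g) h).
rewrite !big_cat /= (sum_scl (-1) s (fun g => coef (F g) h)) => E.
have E2 : forall g, coef (u ++ scl (-1) s ++ t) g = 0.
  move=> g; by rewrite !coef_cat coef_scl Hu mulN1r (addrC (- _)) -opprB addNr.
exact: helper1 (E E2).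
Qed.

Lemma eqB_lin_elem (G H : eqType) (Rel : seq (int * H) -> Prop) F1 F2 (u : seq (int * G)) :
  (forall p, p \in u -> eqB Rel (F1 p.2) (F2 p.2)) -> eqB Rel (lin F1 u) (lin F2 u).
Proof.
elim: u => [|p u IH] Hp; first exact: eqB_refl.
rewrite (lin_cat F1 [:: p]) (lin_cat F2 [:: p]).
apply: eqB_cat; last by apply: IH => q Hq; apply: Hp; rewrite inE Hq orbT.
rewrite /lin /= !cats0; apply: eqB_scl; apply: Hp; exact: mem_head.
Qed.

Lemma lin_unit (G : eqType) (u : seq (int * G)) :
  coef (lin (fun g => [:: (1, g)]) u) =1 coef u.
Proof.
move=> g; rewrite coef_lin /coef [RHS]big_mkcond /=; apply: eq_bigr => p _.
by rewrite big_cons big_nil /=; case: ifP; rewrite ?mulr1 ?mulr0 ?addr0.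
Qed.

Lemma eqB_self_lin (G : eqType) (Rel : seq (int * G) -> Prop) F (u : seq (int * G)) :
  (forall p, p \in u -> eqB Rel [:: (1, p.2)] (F p.2)) -> eqB Rel u (lin F u).
Proof.
move=> H; apply: eqB_ext (eqB_lin_elem H) => // g; exact: lin_unit.
Qed.


Lemma pidxK m n : cancel (@pidx m n) (@punidx m n).
Proof. by move=> p; rewrite /pidx /punidx cast_ordK enum_rankK. Qed.
Lemma punidxK m n : cancel (@punidx m n) (@pidx m n).
Proof. by move=> i; rewrite /pidx /punidx enum_valK cast_ordKV. Qed.
Lemma pidx_inj m n : injective (@pidx m n).
Proof. exact: can_inj (@pidxK m n). Qed.
Lemma punidx_inj m n : injective (@punidx m n).
Proof. exact: can_inj (@punidxK m n). Qed.

Lemma mprodE' (M N : magma) i j : mop (mprod M N) i j =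
  pidx (mop M (punidx i).1 (punidx j).1, mop N (punidx i).2 (punidx j).2).
Proof. by rewrite /mop /= !ffunE. Qed.

Lemma mprodE (M N : magma) a b c d :
  mop (mprod M N) (pidx (a, b)) (pidx (c, d)) = pidx (mop M a c, mop N b d).
Proof. by rewrite mprodE' !pidxK. Qed.

Lemma permrackE (X : permset) a b : mop (permrack X) a b = tagged X b.
Proof. by rewrite /mop /= !ffunE. Qed.

Lemma pprodE (X Y : permset) a b :
  tagged (pprod X Y) (pidx (a, b)) = pidx (tagged X a, tagged Y b).
Proof. by rewrite /pprod /= permE /= pidxK. Qed.

Definition mhom (N M : magma) (f : 'I_(tag N) -> 'I_(tag M)) :=
  forall a b, f (mop N a b) = mop M (f a) (f b).

Lemma rackP (M : magma) :
  is_rack M <-> (forall a, injective (mop M a)) /\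
               (forall a b c, mop M a (mop M b c) = mop M (mop M a b) (mop M a c)).
Proof.
split=> [[Hb Hs]|[Hi Hs]]; split => // a.
  exact: bij_inj.
exact: injF_bij.
Qed.

Lemma rack_inj (M : magma) a : is_rack M -> injective (mop M a).
Proof. by case/rackP => H _; apply: H. Qed.
Lemma rack_sd (M : magma) a b c : is_rack M ->
  mop M a (mop M b c) = mop M (mop M a b) (mop M a c).
Proof. by case/rackP => _ H; apply: H. Qed.

Lemma quandle_rack M : is_quandle M -> is_rack M.
Proof. by case. Qed.

Lemma rack_prod M N : is_rack M -> is_rack N -> is_rack (mprod M N).
Proof.
move=> HM HN; apply/rackP; split.
  move=> i j k; rewrite !mprodE' => /pidx_inj [/rack_inj E1 /rack_inj E2].
  apply: punidx_inj; rewrite [punidx j]surjective_pairing [punidx k]surjective_pairing.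
  by rewrite E1 // E2.
move=> i j k; rewrite -(punidxK i) -(punidxK j) -(punidxK k).
case: (punidx i) => a1 a2; case: (punidx j) => b1 b2; case: (punidx k) => c1 c2.
by rewrite !mprodE (rack_sd a1 b1 c1 HM) (rack_sd a2 b2 c2 HN).
Qed.

Lemma rack_perm X : is_rack (permrack X).
Proof.
apply/rackP; split => [a b c|a b c]; rewrite !permrackE //.
exact: perm_inj.
Qed.

Lemma emb_rack N M (f : 'I_(tag N) -> 'I_(tag M)) :
  is_rack M -> injective f -> mhom f -> is_rack N.
Proof.
move=> HM fi fh; apply/rackP; split.
  by move=> a b c /(congr1 f); rewrite !fh => /(rack_inj HM) /fi.
by move=> a b c; apply: fi; rewrite !fh rack_sd.
Qed.

Lemma emb_quandle N M (f : 'I_(tag N) -> 'I_(tag M)) :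
  is_quandle M -> injective f -> mhom f -> is_quandle N.
Proof.
move=> [HM Hi] fi fh; split; first exact: emb_rack fi fh.
by move=> a; apply: fi; rewrite fh Hi.
Qed.

Lemma miso_prod M M' N N' : miso M M' -> miso N N' -> miso (mprod M N) (mprod M' N').
Proof.
move=> [f [[g fK gK] fh]] [f' [[g' fK' gK'] fh']].
exists (fun i => pidx (f (punidx i).1, f' (punidx i).2)); split.
  exists (fun i => pidx (g (punidx i).1, g' (punidx i).2)) => i;
  by rewrite pidxK /= ?fK ?fK' ?gK ?gK' -surjective_pairing punidxK.
by move=> i j; rewrite !mprodE' !pidxK /= fh fh'.
Qed.

Lemma miso_perm X Y : piso X Y -> miso (permrack X) (permrack Y).
Proof.
move=> [f [fb fh]]; exists f; split => // a b; by rewrite !permrackE.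
Qed.

Definition split2 (M N1 N2 : magma) (f1 : 'I_(tag N1) -> 'I_(tag M))
    (f2 : 'I_(tag N2) -> 'I_(tag M)) :=
  [/\ injective f1, injective f2, mhom f1, mhom f2 &
      (forall x, (exists a, x = f1 a) \/ (exists b, x = f2 b)) /\
      (forall a b, f1 a <> f2 b)].

Lemma subrack_img N M (f : 'I_(tag N) -> 'I_(tag M)) :
  is_rack M -> mhom f -> subrack [set f x | x in 'I_(tag N)].
Proof.
move=> HM fh s /imsetP [a _ ->]; apply/eqP; rewrite eqEcard.
set S := [set f x | x in 'I_(tag N)].
have -> : #|[set mop M (f a) x | x in S]| = #|S| by apply: card_imset; exact: rack_inj HM.
rewrite leqnn andbT.
apply/subsetP => y /imsetP [x /imsetP [b _ ->] ->].
by rewrite -fh; apply: imset_f.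
Qed.

Lemma mdecomp_emb M N1 N2 f1 f2 : is_rack M -> @split2 M N1 N2 f1 f2 -> mdecomp M N1 N2.
Proof.
move=> HM [i1 i2 h1 h2 [cov dis]].
exists [set f1 x | x in 'I_(tag N1)], [set f2 x | x in 'I_(tag N2)]; split.
- exact: subrack_img.
- exact: subrack_img.
- apply/pred0P => x /=; apply/negP => /andP [/imsetP [a _ ->] /imsetP [b _ E]].
  exact: (dis a b).
- apply/setP => x; rewrite !inE; case: (cov x) => [[a ->]|[b ->]].
    by rewrite imset_f.
  by rewrite orbC imset_f.
- by split; [exists f1 | exists f2].
Qed.

Lemma mdecomp_split M N1 N2 : mdecomp M N1 N2 -> exists f1 f2, @split2 M N1 N2 f1 f2.
Proof.
move=> [S [T [sS sT dST cST [[f1 [i1 [im1 h1]]] [f2 [i2 [im2 h2]]]]]]].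
exists f1, f2; split => //; split.
  move=> x; have : x \in S :|: T by rewrite cST inE.
  rewrite inE -im1 -im2 => /orP [/imsetP [a _ ->]|/imsetP [b _ ->]].
    by left; exists a.
  by right; exists b.
move=> a b E.
have : f1 a \in S by rewrite -im1 imset_f.
have : f2 b \in T by rewrite -im2 imset_f.
rewrite -E => H1 H2.
by move/pred0P: dST => /(_ (f1 a)) /=; rewrite H1 H2.
Qed.


Lemma miso_refl M : miso M M.
Proof. by exists id; split => //; exists id. Qed.

Lemma mdecomp_prodl M S T N : is_rack M -> is_rack N -> mdecomp M S T ->
  mdecomp (mprod M N) (mprod S N) (mprod T N).
Proof.
move=> HM HN /mdecomp_split [f1 [f2 [i1 i2 h1 h2 [cov dis]]]].
apply: (@mdecomp_emb (mprod M N) (mprod S N) (mprod T N) (fun i => pidx (f1 (punidx i).1, (punidx i).2))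
                           (fun i => pidx (f2 (punidx i).1, (punidx i).2)));
  first exact: rack_prod.
split.
- move=> i j /pidx_inj [/i1 E1 E2]; apply: punidx_inj.
  by rewrite [punidx i]surjective_pairing [punidx j]surjective_pairing E1 E2.
- move=> i j /pidx_inj [/i2 E1 E2]; apply: punidx_inj.
  by rewrite [punidx i]surjective_pairing [punidx j]surjective_pairing E1 E2.
- by move=> i j; rewrite !mprodE' !pidxK /= h1.
- by move=> i j; rewrite !mprodE' !pidxK /= h2.
split.
  move=> x; rewrite -(punidxK x); case: (punidx x) => m n.
  case: (cov m) => [[a ->]|[b ->]].
    by left; exists (pidx (a, n)); rewrite pidxK.
  by right; exists (pidx (b, n)); rewrite pidxK.
by move=> a b /pidx_inj [/dis].
Qed.

Lemma mdecomp_prodr M S T N : is_rack M -> is_rack N -> mdecomp M S T ->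
  mdecomp (mprod N M) (mprod N S) (mprod N T).
Proof.
move=> HM HN /mdecomp_split [f1 [f2 [i1 i2 h1 h2 [cov dis]]]].
apply: (@mdecomp_emb (mprod N M) (mprod N S) (mprod N T) (fun i => pidx ((punidx i).1, f1 (punidx i).2))
                           (fun i => pidx ((punidx i).1, f2 (punidx i).2)));
  first exact: rack_prod.
split.
- move=> i j /pidx_inj [E1 /i1 E2]; apply: punidx_inj.
  by rewrite [punidx i]surjective_pairing [punidx j]surjective_pairing E1 E2.
- move=> i j /pidx_inj [E1 /i2 E2]; apply: punidx_inj.
  by rewrite [punidx i]surjective_pairing [punidx j]surjective_pairing E1 E2.
- by move=> i j; rewrite !mprodE' !pidxK /= h1.
- by move=> i j; rewrite !mprodE' !pidxK /= h2.
split.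
  move=> x; rewrite -(punidxK x); case: (punidx x) => n m.
  case: (cov m) => [[a ->]|[b ->]].
    by left; exists (pidx (n, a)); rewrite pidxK.
  by right; exists (pidx (n, b)); rewrite pidxK.
by move=> a b /pidx_inj [_ /dis].
Qed.

Lemma pdecomp_split X Y Z : pdecomp X Y Z ->
  exists (f1 : 'I_(tag Y) -> 'I_(tag X)) (f2 : 'I_(tag Z) -> 'I_(tag X)),
  [/\ injective f1, injective f2, (forall a, f1 (tagged Y a) = tagged X (f1 a)),
      (forall a, f2 (tagged Z a) = tagged X (f2 a)) &
      (forall x, (exists a, x = f1 a) \/ (exists b, x = f2 b)) /\
      (forall a b, f1 a <> f2 b)].
Proof.
move=> [S [T [sS sT dST [cST [[f1 [i1 [im1 h1]]] [f2 [i2 [im2 h2]]]]]]]].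
exists f1, f2; split => //; split.
  move=> x; have : x \in S :|: T by rewrite cST inE.
  rewrite inE -im1 -im2 => /orP [/imsetP [a _ ->]|/imsetP [b _ ->]].
    by left; exists a.
  by right; exists b.
move=> a b E.
have : f1 a \in S by rewrite -im1 imset_f.
have : f2 b \in T by rewrite -im2 imset_f.
rewrite -E => H1 H2.
by move/pred0P: dST => /(_ (f1 a)) /=; rewrite H1 H2.
Qed.

Lemma mdecomp_perm X Y Z : pdecomp X Y Z ->
  mdecomp (permrack X) (permrack Y) (permrack Z).
Proof.
move=> /pdecomp_split [f1 [f2 [i1 i2 h1 h2 [cov dis]]]].
apply: (@mdecomp_emb (permrack X) (permrack Y) (permrack Z) f1 f2); first exact: rack_perm.
split => //.
- by move=> a b; rewrite !permrackE h1.
- by move=> a b; rewrite !permrackE h2.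
Qed.

Definition Phi (g : permset * magma) : seq (int * magma) :=
  [:: (1, mprod (permrack g.1) g.2)].

Lemma phi_lin s : phi s = lin Phi s.
Proof. by elim: s => //= p s IH; rewrite IH /lin /= mulr1. Qed.

Lemma part1 s t : eqB TensorRel s t -> eqB RackRel (phi s) (phi t).
Proof.
rewrite !phi_lin; apply: transfer => r.
rewrite -phi_lin => -[[r0 [Q [Hr0 [HQ ->]]]]|[X [r0 [Hr0 ->]]]].
  case: Hr0 => [[X [Y [HXY ->]]]|[X [Y [Z [HXYZ ->]]]]]; apply: eqB_rel.
    left; exists (mprod (permrack X) Q), (mprod (permrack Y) Q); split => //.
    - exact: rack_prod (rack_perm _) (quandle_rack HQ).
    - exact: rack_prod (rack_perm _) (quandle_rack HQ).
    - exact: miso_prod (miso_perm HXY) (miso_refl Q).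
  right; exists (mprod (permrack X) Q), (mprod (permrack Y) Q), (mprod (permrack Z) Q).
  split => //.
  - exact: rack_prod (rack_perm _) (quandle_rack HQ).
  - apply: mdecomp_prodl; [exact: rack_perm|exact: quandle_rack|exact: mdecomp_perm].
case: Hr0 => [[R1 [R2 [H1 H2 H12 ->]]]|[R [S [T [HR HRST ->]]]]]; apply: eqB_rel.
  left; exists (mprod (permrack X) R1), (mprod (permrack X) R2); split => //.
  - exact: rack_prod (rack_perm _) (quandle_rack H1).
  - exact: rack_prod (rack_perm _) (quandle_rack H2).
  - exact: miso_prod (miso_refl _) H12.
right; exists (mprod (permrack X) R), (mprod (permrack X) S), (mprod (permrack X) T).
split => //.
- exact: rack_prod (rack_perm _) (quandle_rack HR).
- apply: mdecomp_prodr => //; [exact: quandle_rack|exact: rack_perm].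
Qed.


Lemma eqB_pair (G : eqType) (Rel : seq (int * G) -> Prop) c A B :
  Rel [:: (1, A); (-1, B)] -> eqB Rel [:: (c, A)] [:: (c, B)].
Proof.
move=> H.
have H1 : eqB Rel [:: (1, A)] [:: (1, B)].
  apply: zspan_ext (zspan_rel H) _ => x; rewrite !coef_cons !coef_nil /=.
  by case: (A == x); case: (B == x).
by have := eqB_scl c H1; rewrite /scl /= mulr1.
Qed.

Lemma eqB_allpairs (S T H : eqType) (Rel : seq (int * H) -> Prop)
    (F1 F2 : S -> T -> int * H) (s : seq S) (t : seq T) :
  (forall p q, p \in s -> q \in t -> eqB Rel [:: F1 p q] [:: F2 p q]) ->
  eqB Rel [seq F1 p q | p <- s, q <- t] [seq F2 p q | p <- s, q <- t].
Proof.
elim: s => [|p s IH] Hst; first exact: eqB_refl.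
rewrite !allpairs_cons; apply: eqB_cat; last first.
  by apply: IH => p' q Hp Hq; apply: Hst; rewrite // inE Hp orbT.
have : forall q, q \in t -> eqB Rel [:: F1 p q] [:: F2 p q].
  by move=> q Hq; apply: Hst; rewrite ?mem_head.
elim: t {Hst IH} => [|q t IH] Ht; first exact: eqB_refl.
rewrite /= -[_ :: [seq _ | _ <- t]]cat1s -[F2 p q :: _]cat1s.
apply: eqB_cat; first by apply: Ht; rewrite mem_head.
by apply: IH => q' Hq; apply: Ht; rewrite inE Hq orbT.
Qed.

Lemma pidx2_case a b c d (i : 'I_((a * b) * (c * d))) :
  exists x y z w, i = pidx (pidx (x, y), pidx (z, w)).
Proof.
exists (punidx (punidx i).1).1, (punidx (punidx i).1).2,
       (punidx (punidx i).2).1, (punidx (punidx i).2).2.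
by rewrite -!surjective_pairing !punidxK -surjective_pairing punidxK.
Qed.

Definition sw a b c d (i : 'I_((a * b) * (c * d))) : 'I_((a * c) * (b * d)) :=
  pidx (pidx ((punidx (punidx i).1).1, (punidx (punidx i).2).1),
        pidx ((punidx (punidx i).1).2, (punidx (punidx i).2).2)).

Lemma swE a b c d x y z w :
  @sw a b c d (pidx (pidx (x, y), pidx (z, w))) = pidx (pidx (x, z), pidx (y, w)).
Proof. by rewrite /sw !pidxK. Qed.

Lemma swK a b c d (i : 'I_((a * b) * (c * d))) : sw (sw i) = i.
Proof. by have [x [y [z [w ->]]]] := pidx2_case i; rewrite !swE. Qed.

Lemma mul_iso X X' Q Q' :
  miso (mprod (permrack (pprod X X')) (mprod Q Q'))
       (mprod (mprod (permrack X) Q) (mprod (permrack X') Q')).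
Proof.
exists (@sw _ _ _ _); split.
  by exists (@sw _ _ _ _) => i; rewrite swK.
move=> i j.
have [x [y [z [w ->]]]] := pidx2_case i.
have [x' [y' [z' [w' ->]]]] := pidx2_case j.
by rewrite !mprodE !permrackE pprodE !swE ?pidxK /= ?mprodE ?permrackE.
Qed.

Lemma part2 s t : tensor_gens s -> tensor_gens t ->
  eqB RackRel (phi (fmul tprod s t)) (fmul mprod (phi s) (phi t)).
Proof.
move=> Hs Ht; rewrite /phi /fmul map_allpairs allpairs_mapl allpairs_mapr /=.
apply: eqB_allpairs => p q Hp Hq; apply: eqB_pair; left.
exists (mprod (permrack (pprod p.2.1 q.2.1)) (mprod p.2.2 q.2.2)),
       (mprod (mprod (permrack p.2.1) p.2.2) (mprod (permrack q.2.1) q.2.2)).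
have Rp := quandle_rack (Hs p Hp); have Rq := quandle_rack (Ht q Hq).
split => //.
- by apply: rack_prod; [exact: rack_perm|exact: rack_prod].
- by apply: rack_prod; apply: rack_prod => //; exact: rack_perm.
- exact: mul_iso.
Qed.

Lemma part3 : eqB RackRel (phi [:: (1, (ppoint, mpoint))]) [:: (1, mpoint)].
Proof.
apply: eqB_pair; left; exists (mprod (permrack ppoint) mpoint), mpoint.
have E1 : forall x y : 'I_1, x = y by move=> x y; rewrite (ord1 x) (ord1 y).
have Rm : is_rack mpoint by apply/rackP; split => [a b c _|a b c]; apply: E1.
split => //.
- by apply: rack_prod => //; exact: rack_perm.
- exists (fun _ => ord0); split.
    by exists (fun _ => ord0) => i; apply: E1.
  by move=> a b; apply: E1.
Qed.

Local Close Scope ring_scope.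

Definition mk (T : finType) (op : T -> T -> T) : magma :=
  existT _ #|T| [ffun i => [ffun j => enum_rank (op (enum_val i) (enum_val j))]].

Lemma mkE (T : finType) (op : T -> T -> T) i j :
  mop (mk op) i j = enum_rank (op (enum_val i) (enum_val j)).
Proof. by rewrite /mop /= !ffunE. Qed.

Section MK.
Variables (T : finType) (op : T -> T -> T).
Hypothesis opi : forall a, injective (op a).
Hypothesis opsd : forall a b c, op a (op b c) = op (op a b) (op a c).

Lemma mk_rack : is_rack (mk op).
Proof.
apply/rackP; split.
  by move=> a b c; rewrite !mkE => /enum_rank_inj /opi /enum_val_inj.
by move=> a b c; rewrite !mkE !enum_rankK opsd.
Qed.

Lemma mk_quandle : (forall a, op a a = a) -> is_quandle (mk op).
Proof. by move=> Hid; split; [exact: mk_rack | move=> a; rewrite mkE Hid enum_valK]. Qed.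
End MK.

Lemma miso_mk (T1 T2 : finType) (op1 : T1 -> T1 -> T1) (op2 : T2 -> T2 -> T2)
    (h : T1 -> T2) : bijective h -> (forall a b, h (op1 a b) = op2 (h a) (h b)) ->
  miso (mk op1) (mk op2).
Proof.
move=> [g hK gK] hh.
exists (fun i => enum_rank (h (enum_val i))); split.
  exists (fun i => enum_rank (g (enum_val i))) => i;
  by rewrite enum_rankK ?hK ?gK enum_valK.
by move=> i j; rewrite !mkE !enum_rankK hh.
Qed.

Lemma miso_mkl (T : finType) (op : T -> T -> T) (N : magma) (h : T -> 'I_(tag N)) :
  bijective h -> (forall a b, h (op a b) = mop N (h a) (h b)) -> miso (mk op) N.
Proof.
move=> [g hK gK] hh.
exists (fun i => h (enum_val i)); split.
  by exists (fun i => enum_rank (g i)) => i; rewrite ?enum_rankK ?gK ?hK ?enum_valK.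
by move=> i j; rewrite !mkE enum_rankK hh.
Qed.

Lemma mk_split (T T1 T2 : finType) (op : T -> T -> T) (op1 : T1 -> T1 -> T1)
    (op2 : T2 -> T2 -> T2) (h1 : T1 -> T) (h2 : T2 -> T) :
  injective h1 -> injective h2 ->
  (forall a b, h1 (op1 a b) = op (h1 a) (h1 b)) ->
  (forall a b, h2 (op2 a b) = op (h2 a) (h2 b)) ->
  (forall x, (exists a, x = h1 a) \/ (exists b, x = h2 b)) ->
  (forall a b, h1 a <> h2 b) ->
  split2 (fun i : 'I_(tag (mk op1)) => (enum_rank (h1 (enum_val i)) : 'I_(tag (mk op))))
         (fun i : 'I_(tag (mk op2)) => (enum_rank (h2 (enum_val i)) : 'I_(tag (mk op)))).
Proof.
move=> i1 i2 hh1 hh2 cov dis; split.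
- by move=> a b /enum_rank_inj /i1 /enum_val_inj.
- by move=> a b /enum_rank_inj /i2 /enum_val_inj.
- by move=> a b; rewrite !mkE !enum_rankK hh1.
- by move=> a b; rewrite !mkE !enum_rankK hh2.
split.
  move=> x; case: (cov (enum_val x)) => [[a E]|[b E]].
    by left; exists (enum_rank a); rewrite enum_rankK -E enum_valK.
  by right; exists (enum_rank b); rewrite enum_rankK -E enum_valK.
by move=> a b /enum_rank_inj; apply: dis.
Qed.

Notation forder := fingraph.order.
Definition th (R : magma) (a : 'I_(tag R)) := mop R a a.

Section Rack.
Variable R : magma.
Hypothesis HR : is_rack R.
Local Notation "a |> b" := (mop R a b) (at level 40).

Lemma l_th a b : th a |> b = a |> b.
Proof.
case: HR => /(_ a) [g gK Kg] _.
by rewrite -[b]Kg /th -rack_sd.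
Qed.

Lemma th_r a b : a |> th b = th (a |> b).
Proof. by rewrite /th rack_sd. Qed.

Lemma th_hom : mhom (@th R).
Proof. by move=> a b; rewrite l_th th_r. Qed.

Lemma th_inj : injective (@th R).
Proof.
move=> a b E.
have El : forall c, a |> c = b |> c by move=> c; rewrite -l_th E l_th.
apply: (rack_inj HR (a := a)).
by rewrite -[a |> a]/(th a) E /th El.
Qed.

Lemma iter_th_l k a b : iter k (@th R) a |> b = a |> b.
Proof. by elim: k => //= k IH; rewrite l_th. Qed.

Lemma iter_th_r k a b : a |> iter k (@th R) b = iter k (@th R) (a |> b).
Proof. by elim: k => //= k IH; rewrite th_r IH. Qed.

Lemma fconn_sym : connect_sym (frel (@th R)).
Proof. exact: fconnect_sym th_inj. Qed.

Lemma froot_eq a b : fconnect (@th R) a b -> froot (@th R) a = froot (@th R) b.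
Proof. by move/(fingraph.rootP fconn_sym). Qed.

Lemma froot_conn a b : froot (@th R) a = froot (@th R) b -> fconnect (@th R) a b.
Proof. by move/(fingraph.rootP fconn_sym). Qed.

Lemma conn_root' a : fconnect (@th R) (froot (@th R) a) a.
Proof. by rewrite fconn_sym connect_root. Qed.

Lemma conn_iter a b : fconnect (@th R) a b -> exists k, b = iter k (@th R) a.
Proof. by move=> H; exists (findex (@th R) a b); rewrite iter_findex. Qed.

Lemma conn_order a b : fconnect (@th R) a b -> forder (@th R) a = forder (@th R) b.
Proof. by move=> H; apply: eq_card => x; apply: (same_connect fconn_sym H x). Qed.

Lemma l_conn c c' d d' : fconnect (@th R) c c' -> fconnect (@th R) d d' ->
  fconnect (@th R) (c |> d) (c' |> d').
Proof.
move=> /conn_iter [k ->] /conn_iter [j ->].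
by rewrite iter_th_l iter_th_r fconnect_iter.
Qed.

End Rack.

Section Hom.
Variables (N M : magma) (f : 'I_(tag N) -> 'I_(tag M)).
Hypothesis fh : mhom f.

Lemma hom_th a : f (th a) = th (f a).
Proof. by rewrite /th fh. Qed.

Lemma hom_iter k a : f (iter k (@th N) a) = iter k (@th M) (f a).
Proof. by elim: k => //= k IH; rewrite hom_th IH. Qed.

Lemma hom_conn a b : fconnect (@th N) a b -> fconnect (@th M) (f a) (f b).
Proof.
by move=> H; rewrite -(iter_findex H) hom_iter fconnect_iter.
Qed.

Hypothesis fi : injective f.

Lemma inj_conn a b : fconnect (@th M) (f a) (f b) -> fconnect (@th N) a b.
Proof.
move=> H; have := iter_findex H; rewrite -hom_iter => /fi <-.
exact: fconnect_iter.
Qed.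

Lemma order_hom a : forder (@th M) (f a) = forder (@th N) a.
Proof.
rewrite /forder /fingraph.order -(card_imset (mem (fconnect (@th N) a)) fi).
apply: eq_card => y; rewrite inE /=; apply/idP/imsetP.
  by move=> H; exists (iter (findex (@th M) (f a) y) (@th N) a);
    rewrite ?inE ?fconnect_iter // hom_iter iter_findex.
by move=> [z Hz ->]; apply: hom_conn.
Qed.
End Hom.


Definition qP (R : magma) (n : nat) (a : 'I_(tag R)) : bool :=
  (forder (@th R) a == n) && (froot (@th R) a == a).
Arguments qP : clear implicits.
Definition qT (R : magma) (n : nat) := {a : 'I_(tag R) | qP R n a}.
Definition qop (R : magma) (n : nat) (a b : qT R n) : qT R n :=
  insubd a (froot (@th R) (mop R (val a) (val b))).
Definition lam (R : magma) (n : nat) : magma := mk (@qop R n).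

Section Quot.
Variables (R : magma) (n : nat).
Hypothesis HR : is_rack R.
Local Notation "a |> b" := (mop R a b) (at level 40).
Local Notation th := (@th R).

Lemma qP_root a : qP R n (froot th a) = (forder th a == n).
Proof.
by rewrite /qP (fingraph.root_root (fconn_sym HR)) eqxx andbT
  -(conn_order HR (fingraph.connect_root _ a)).
Qed.

Lemma val_root (a : qT R n) : froot th (val a) = val a.
Proof. by case: a => x /= /andP [_ /eqP]. Qed.

Lemma val_order (a : qT R n) : forder th (val a) = n.
Proof. by case: a => x /= /andP [/eqP]. Qed.

Lemma order_l a b : forder th (a |> b) = forder th b.
Proof.
apply: (order_hom (f := mop R a)); last exact: rack_inj.
by move=> x y; rewrite rack_sd.
Qed.

Lemma qop_val (a b : qT R n) : val (qop a b) = froot th (val a |> val b).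
Proof. by rewrite /qop val_insubd qP_root order_l val_order eqxx. Qed.

Lemma val_eq (a b : qT R n) : fconnect th (val a) (val b) -> a = b.
Proof. by move/(froot_eq HR); rewrite !val_root => /val_inj. Qed.

Lemma qop_inj (a : qT R n) : injective (@qop R n a).
Proof.
move=> b c /(congr1 val); rewrite !qop_val => /(froot_conn HR) /conn_iter [k].
rewrite -iter_th_r // => /(rack_inj HR) E; apply: val_eq; rewrite E.
exact: fconnect_iter.
Qed.

Lemma qop_sd (a b c : qT R n) : qop a (qop b c) = qop (qop a b) (qop a c).
Proof.
apply: val_inj; rewrite !qop_val.
rewrite (froot_eq HR (l_conn HR (connect0 _ (val a)) (conn_root' HR (val b |> val c)))).
rewrite (froot_eq HR (l_conn HR (conn_root' HR (val a |> val b))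
                               (conn_root' HR (val a |> val c)))).
by rewrite rack_sd.
Qed.

Lemma qop_id (a : qT R n) : qop a a = a.
Proof.
apply: val_inj; rewrite qop_val -/(th (val a)) -(froot_eq HR (fconnect1 _ _)).
exact: val_root.
Qed.

Lemma lam_quandle : is_quandle (lam R n).
Proof. apply: mk_quandle; [exact: qop_inj|exact: qop_sd|exact: qop_id]. Qed.

End Quot.

Section QMap.
Variables (N M : magma) (n : nat) (f : 'I_(tag N) -> 'I_(tag M)).
Hypotheses (HN : is_rack N) (HM : is_rack M) (fh : mhom f) (fi : injective f).

Lemma qmap_P (a : qT N n) : qP M n (froot (@th M) (f (val a))).
Proof. by rewrite qP_root // order_hom // val_order. Qed.

Definition qmap (a : qT N n) : qT M n := exist (fun x => qP M n x) _ (qmap_P a).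

Lemma qmap_val a : val (qmap a) = froot (@th M) (f (val a)).
Proof. by []. Qed.

Lemma qmap_hom (a b : qT N n) : qmap (qop a b) = qop (qmap a) (qmap b).
Proof.
apply: val_inj; rewrite qmap_val !qop_val // !qmap_val.
rewrite -(froot_eq HM (hom_conn fh (fingraph.connect_root _ _))) fh.
apply: froot_eq => //; apply: l_conn => //; exact: fingraph.connect_root.
Qed.

Lemma qmap_inj : injective qmap.
Proof.
move=> a b /(congr1 val); rewrite !qmap_val => /(froot_conn HM) /(inj_conn fh fi).
exact: val_eq.
Qed.
End QMap.

Lemma qmap_inv (N M : magma) n (f : 'I_(tag N) -> 'I_(tag M)) g
  (HN : is_rack N) (HM : is_rack M) (fh : mhom f) (fi : injective f)
  (gh : mhom g) (gi : injective g) :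
  (forall x, g (f x) = x) -> forall a : qT N n,
  qmap HN gh gi (qmap HM fh fi a) = a.
Proof.
move=> gf a; apply: val_inj; rewrite !qmap_val.
rewrite -(froot_eq HN (hom_conn gh (fingraph.connect_root _ _))) gf.
exact: val_root.
Qed.

Local Open Scope ring_scope.

Lemma lam_iso R1 R2 n : is_rack R1 -> is_rack R2 -> miso R1 R2 -> miso (lam R1 n) (lam R2 n).
Proof.
move=> H1 H2 [f [[g fK gK] fh]].
have fi : injective f := can_inj fK.
have gi : injective g := can_inj gK.
have gh : mhom g by move=> a b; apply: fi; rewrite fh !gK.
apply: (@miso_mk _ _ _ _ (qmap H2 fh fi)); last exact: qmap_hom.
by exists (qmap H1 gh gi); apply: qmap_inv.
Qed.

Lemma lam_decomp R S T n : is_rack R -> mdecomp R S T ->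
  mdecomp (lam R n) (lam S n) (lam T n).
Proof.
move=> HR /mdecomp_split [f1 [f2 [i1 i2 h1 h2 [cov dis]]]].
have HS := emb_rack HR i1 h1; have HT := emb_rack HR i2 h2.
apply: mdecomp_emb; first exact: quandle_rack (lam_quandle n HR).
apply: (@mk_split _ _ _ _ _ _ (qmap HR h1 i1) (qmap HR h2 i2)).
- exact: qmap_inj.
- exact: qmap_inj.
- exact: qmap_hom.
- exact: qmap_hom.
- move=> x; case: (cov (val x)) => [[a E]|[b E]].
    have P : qP S n (froot (@th S) a).
      by rewrite qP_root // -(order_hom h1 i1) -E val_order.
    left; exists (exist (fun y => qP S n y) _ P); apply: val_inj.
    rewrite qmap_val /= (froot_eq HR (hom_conn h1 (conn_root' HS a))) -E.
    by rewrite val_root.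
  have P : qP T n (froot (@th T) b).
    by rewrite qP_root // -(order_hom h2 i2) -E val_order.
  right; exists (exist (fun y => qP T n y) _ P); apply: val_inj.
  rewrite qmap_val /= (froot_eq HR (hom_conn h2 (conn_root' HT b))) -E.
  by rewrite val_root.
- move=> a b /(congr1 val); rewrite !qmap_val => /(froot_conn HR) /conn_iter [k].
  by rewrite -hom_iter //; move/esym/dis.
Qed.

Lemma lin_single (G H : eqType) (f : G -> H) (u : seq (int * G)) :
  lin (fun g => [:: (1, f g)]) u = [seq (p.1, f p.2) | p <- u].
Proof. by elim: u => //= p u <-; rewrite /lin /= mulr1. Qed.

Lemma lam_transfer n s t : eqB RackRel s t ->
  eqB QuandleRel [seq (p.1, lam p.2 n) | p <- s] [seq (p.1, lam p.2 n) | p <- t].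
Proof.
rewrite -!(lin_single (fun R => lam R n)); apply: transfer => r.
rewrite lin_single => -[[R1 [R2 [H1 H2 H12 ->]]]|[R [S [T [HR HRST ->]]]]];
  apply: eqB_rel.
  left; exists (lam R1 n), (lam R2 n); split => //.
  - exact: lam_quandle.
  - exact: lam_quandle.
  - exact: lam_iso.
right; exists (lam R n), (lam S n), (lam T n); split => //.
- exact: lam_quandle.
- exact: lam_decomp.
Qed.

Local Close Scope ring_scope.

Definition cyc (n : nat) : permset := existT _ n (perm (@ordS_inj n)).

Lemma iter_ordS n k (x : 'I_n) : val (iter k (@ordS n) x) = (x + k) %% n.
Proof.
elim: k => [|k IH] /=; first by rewrite addn0 modn_small.
by rewrite IH -addn1 modnDml addn1 addnS.
Qed.

Section CycQ.
Variables (n : nat) (Q : magma).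
Hypothesis HQ : is_quandle Q.
Let M := mprod (permrack (cyc n)) Q.
Let HM : is_rack M := rack_prod (rack_perm _) (quandle_rack HQ).

Lemma thM x q : @th M (pidx (x, q)) = pidx (ordS x, q).
Proof. by rewrite /th mprodE permrackE /= permE; case: HQ => _ ->. Qed.

Lemma iterCQ k x q : iter k (@th M) (pidx (x, q)) = pidx (iter k (@ordS n) x, q).
Proof. by elim: k => //= k ->; rewrite thM. Qed.

Lemma conn_M a b : fconnect (@th M) a b = ((punidx a).2 == (punidx b).2).
Proof.
rewrite -(punidxK a) -(punidxK b); case: (punidx a) => x q; case: (punidx b) => y r.
rewrite !pidxK /=; apply/idP/eqP.
  by move=> H; have [k] := @conn_iter M _ _ H; rewrite iterCQ => /pidx_inj [_ ->].
move=> <-.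
have -> : y = iter (y + (n - x)) (@ordS n) x.
  apply: val_inj; rewrite iter_ordS.
  have -> : (x + (y + (n - x)) = y + n)%N by have Hx : (x < n)%N := ltn_ord x; lia.
  by rewrite modnDr modn_small.
by rewrite -iterCQ fconnect_iter.
Qed.

Lemma root2 a : (punidx (froot (@th M) a)).2 = (punidx a).2.
Proof. by apply/esym/eqP; rewrite -conn_M fingraph.connect_root. Qed.

Lemma order_M a : forder (@th M) a = n.
Proof.
rewrite /fingraph.order.
set q := (punidx a).2.
transitivity #|[set pidx (y, q) | y in 'I_n]|.
  apply: eq_card => z; rewrite inE /= conn_M eq_sym; apply/eqP/imsetP.
    move=> E; exists (punidx z).1 => //; apply: punidx_inj.
    by rewrite pidxK [punidx z]surjective_pairing /= E.
  by move=> [y _ ->]; rewrite pidxK.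
rewrite card_imset ?card_ord //.
by move=> y y' /pidx_inj [].
Qed.

Lemma lamM_empty m : m != n -> tag (lam M m) = 0%N.
Proof.
move=> Hmn; rewrite /= ; apply: eq_card0 => a.
by move: (@val_order M m a); rewrite order_M => E; exfalso; move/eqP: Hmn; apply.
Qed.

Hypothesis n_gt0 : (0 < n)%N.

Lemma lamM_iso : miso (lam M n) Q.
Proof.
pose h := fun a : qT M n => (punidx (val a)).2.
have P : forall q, qP M n (froot (@th M) (pidx (Ordinal n_gt0, q))).
  by move=> q; rewrite qP_root // order_M.
pose g := fun q => exist (fun y => qP M n y) _ (P q).
have hg : forall q, h (g q) = q by move=> q; rewrite /h /= root2 pidxK.
apply: (@miso_mkl _ _ _ h).
  exists g => // a; apply: val_eq => //; rewrite conn_M.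
  by have := hg (h a); rewrite /h /= => ->.
move=> a b; rewrite /h qop_val // root2 mprodE'.
by rewrite pidxK.
Qed.
End CycQ.

Local Open Scope ring_scope.

Section Sub.
Variables (X : permset) (A : {set 'I_(tag X)}).
Hypothesis HA : forall x, x \in A -> tagged X x \in A.
Local Notation T := {x : 'I_(tag X) | x \in A}.

Definition subf (x : T) : T := exist (fun y => y \in A) _ (HA (valP x)).
Lemma subf_inj : injective subf.
Proof. by move=> x y /(congr1 val) /= /perm_inj /val_inj. Qed.
Definition subp : {perm T} := perm subf_inj.

Lemma mkp_inj : injective (fun i : 'I_#|{: T}| => enum_rank (subp (enum_val i))).
Proof. by move=> i j /enum_rank_inj /perm_inj /enum_val_inj. Qed.

Definition subX : permset := existT _ #|{: T}| (perm mkp_inj).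

Lemma subX_emb : pembeds_onto subX A.
Proof.
exists (fun i => val (enum_val i)); split.
  by move=> i j /val_inj /enum_val_inj.
split.
  apply/setP => x; apply/imsetP/idP => [[i _ ->]|Hx]; first exact: valP.
  exists (enum_rank (exist (fun y => y \in A) x Hx)) => //.
  by rewrite enum_rankK.
by move=> a; rewrite /= permE enum_rankK permE.
Qed.

Lemma subX_tag : tag subX = #|A|.
Proof. by rewrite /= card_sig; apply: eq_card => x; rewrite inE. Qed.
End Sub.

Lemma perm_img (n : nat) (p : {perm 'I_n}) (A : {set 'I_n}) :
  (forall x, x \in A -> p x \in A) -> [set p x | x in A] = A.
Proof.
move=> H; apply/eqP; rewrite eqEcard card_imset ?leqnn ?andbT; last exact: perm_inj.
by apply/subsetP => y /imsetP [x Hx ->]; apply: H.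
Qed.

Lemma eqB_rel3 (G : eqType) (Rel : seq (int * G) -> Prop) X Y Z :
  Rel [:: (1, X); (-1, Y); (-1, Z)] -> eqB Rel [:: (1, X)] ([:: (1, Y)] ++ [:: (1, Z)]).
Proof.
move=> H; apply: zspan_ext (zspan_rel H) _ => x; rewrite /= !coef_cons !coef_nil /=.
by case: (X == x); case: (Y == x); case: (Z == x).
Qed.

Lemma eqB_rel0 (G : eqType) (Rel : seq (int * G) -> Prop) X :
  Rel [:: (1, X); (-1, X); (-1, X)] -> eqB Rel [:: (1, X)] [::].
Proof.
move=> H; apply: zspan_ext (zspan_opp (zspan_rel H)) _ => x; rewrite /= !coef_cons !coef_nil /=.
by case: (X == x).
Qed.

Lemma empty_perm (X : permset) : tag X = 0%N -> eqB PermRel [:: (1, X)] [::].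
Proof.
move=> H0; apply: eqB_rel0; right; exists X, X, X; split => //.
have E : forall x : 'I_(tag X), False by move=> x; have := ltn_ord x; move: (nat_of_ord x); rewrite H0.
exists set0, set0; split.
- by apply/setP => x; case: (E x).
- by apply/setP => x; case: (E x).
- by apply/pred0P => x; case: (E x).
split; first by apply/setP => x; case: (E x).
by split; exists id; split => //; split => //; apply/setP => x; case: (E x).
Qed.

Section Cycle.
Variables (X : permset) (x0 : 'I_(tag X)).
Local Notation pi := (tagged X).
Let n := forder pi x0.

Lemma iter_mod m : iter (m %% n)%N pi x0 = iter m pi x0.
Proof.
have H : forall k, iter (k * n) pi x0 = x0.
  elim=> [|k IH]; first by rewrite mul0n.
  by rewrite mulSn iterD IH iter_order //; exact: perm_inj.
by rewrite {2}(div.divn_eq m n) addnC iterD H.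
Qed.

Definition cemb (k : 'I_(tag (cyc n))) : 'I_(tag X) := iter k pi x0.

Lemma cemb_inj : injective cemb.
Proof.
move=> i j E; apply: ord_inj.
have Hi : (i < n)%N := ltn_ord i. have Hj : (j < n)%N := ltn_ord j.
by rewrite -(findex_iter Hi) -(findex_iter Hj) /cemb in E *; rewrite E.
Qed.

Definition orb : {set 'I_(tag X)} := [set y | fconnect pi x0 y].

Lemma cemb_emb : pembeds_onto (cyc n) orb.
Proof.
exists cemb; split; first exact: cemb_inj.
split.
  apply/setP => y; rewrite inE; apply/imsetP/idP => [[k _ ->]|Hy].
    exact: fconnect_iter.
  exists (Ordinal (findex_max Hy)) => //.
  by rewrite /cemb /= iter_findex.
move=> k; rewrite /cemb /= permE /=; exact: (iter_mod k.+1).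
Qed.

Lemma orb_inv x : x \in orb -> pi x \in orb.
Proof.
rewrite !inE => H; apply: connect_trans H _; exact: fconnect1.
Qed.

Lemma orbC_inv x : x \in ~: orb -> pi x \in ~: orb.
Proof.
by rewrite !inE -same_fconnect1_r //; exact: perm_inj.
Qed.

Lemma cycle_split : pdecomp X (cyc n) (subX orbC_inv).
Proof.
exists orb, (~: orb); split.
- exact: perm_img orb_inv.
- exact: perm_img orbC_inv.
- by apply/pred0P => x /=; rewrite !inE andbN.
split; first exact: setUCr.
split; [exact: cemb_emb | exact: subX_emb].
Qed.

Lemma cycle_small : (tag (subX orbC_inv) < tag X)%N.
Proof.
rewrite subX_tag.
have Hx : x0 \in orb by rewrite inE connect0.
have H1 := cardsC orb; rewrite card_ord in H1.
have : (0 < #|orb|)%N by apply/card_gt0P; exists x0.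
move: H1; move: #|orb| #|~: orb| => a b; lia.
Qed.
End Cycle.

Lemma cyc_decomp (X : permset) : exists ns : seq nat,
  all (fun n => 0 < n)%N ns /\ eqB PermRel [:: (1, X)] [seq (1, cyc n) | n <- ns].
Proof.
move: {2}(tag X) (leqnn (tag X)) => k; elim: k X => [|k IH] X Hk.
  by exists [::]; split => //; apply: empty_perm; lia.
case: (posnP (tag X)) => [H0|Hpos]; first by exists [::]; split => //; apply: empty_perm.
pose x0 := Ordinal Hpos.
have [ns [Hns HZ]] := IH (subX (@orbC_inv X x0)) (ltnSE (leq_trans (@cycle_small X x0) Hk)).
exists (forder (tagged X) x0 :: ns); split; first by rewrite /= fingraph.order_gt0.
apply: eqB_trans (eqB_rel3 _) _.
  right; exists X, (cyc (forder (tagged X) x0)), (subX (@orbC_inv X x0)); split => //.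
  exact: cycle_split.
exact: (eqB_cat (eqB_refl PermRel [:: (1, cyc (forder (tagged X) x0))]) HZ).
Qed.


Definition good (u : seq (int * (permset * magma))) :=
  forall e, e \in u -> [/\ (0 < tag e.2.1)%N, e.2.1 = cyc (tag e.2.1) & is_quandle e.2.2].

Lemma tensor_perm (X : permset) (Q : magma) (HQ : is_quandle Q) (c : int) ns :
  eqB PermRel [:: (1, X)] [seq (1, cyc n) | n <- ns] ->
  eqB TensorRel [:: (c, (X, Q))] [seq (c, (cyc n, Q)) | n <- ns].
Proof.
move=> H.
have Hrel : forall r, PermRel r -> eqB TensorRel (lin (fun Y => [:: (1, (Y, Q))]) r) [::].
  move=> r Hr; rewrite lin_single; apply: eqB_rel; left; exists r, Q; split => //.
have H2 := @transfer _ _ PermRel TensorRel (fun Y => [:: (1, (Y, Q))]) Hrel _ _ H.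
rewrite !lin_single -map_comp /= in H2.
have := eqB_scl c H2; rewrite /scl /= -map_comp /= mulr1.
by congr eqB; apply: eq_map => n /=; rewrite mulr1.
Qed.

Lemma goodify s : tensor_gens s -> exists s', good s' /\ eqB TensorRel s s'.
Proof.
elim: s => [|p s IH] Hs.
  by exists [::]; split => //; exact: eqB_refl.
have [s0 [Hg0 H0]] : exists s', good s' /\ eqB TensorRel s s'.
  by apply: IH => q Hq; apply: Hs; rewrite inE Hq orbT.
have HQ := Hs p (mem_head _ _).
case: p HQ Hs => c [X Q] /= HQ Hs.
have [ns [Hns HX]] := cyc_decomp X.
exists ([seq (c, (cyc n, Q)) | n <- ns] ++ s0); split.
  move=> e; rewrite mem_cat => /orP [/mapP [n Hn ->]|/Hg0 //].
  by split => //=; move/allP: Hns => /(_ n Hn).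
rewrite -cat1s; apply: eqB_cat => //; exact: tensor_perm.
Qed.

Definition bm (m : nat) (u : seq (int * (permset * magma))) : seq (int * magma) :=
  [seq (p.1, p.2.2) | p <- u & tag p.2.1 == m].

Lemma zero_quandle (E : magma) c : is_quandle E -> tag E = 0%N ->
  eqB QuandleRel [:: (c, E)] [::].
Proof.
move=> HE H0.
have Ef : forall x : 'I_(tag E), False by move=> x; have := ltn_ord x; move: (nat_of_ord x); rewrite H0.
have H1 : eqB QuandleRel [:: (1, E)] [::].
  apply: eqB_rel0; right; exists E, E, E; split => //.
  apply: (@mdecomp_emb E E E id id); first exact: quandle_rack.
  by split => // x; case: (Ef x).
by have := eqB_scl c H1; rewrite /scl /= mulr1.
Qed.

Lemma eqB_cons (G : eqType) (Rel : seq (int * G) -> Prop) a b s t :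
  eqB Rel [:: a] [:: b] -> eqB Rel s t -> eqB Rel (a :: s) (b :: t).
Proof. exact: (@eqB_cat _ _ [:: a] [:: b]). Qed.

Lemma eqB_cons0 (G : eqType) (Rel : seq (int * G) -> Prop) a s t :
  eqB Rel [:: a] [::] -> eqB Rel s t -> eqB Rel (a :: s) t.
Proof. exact: (@eqB_cat _ _ [:: a] [::]). Qed.

Lemma lam_bm m u : good u ->
  eqB QuandleRel [seq (p.1, lam p.2 m) | p <- phi u] (bm m u).
Proof.
elim: u => [|e u IH] Hg; first exact: eqB_refl.
have {IH} IH := IH (fun q Hq => Hg q (ltac:(by rewrite inE Hq orbT))).
have [Hn EX HQ] := Hg e (mem_head _ _).
rewrite /bm /= -/(bm m u).
case: eqP => [Em|Nm].
  rewrite /= -/(bm m u); apply: eqB_cons => //.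
  move: Em Hn EX HQ; case: e {Hg} => c [X Q] /= Em Hn EX HQ.
  rewrite EX Em; apply: eqB_pair; left; exists (lam (mprod (permrack (cyc m)) Q) m), Q.
  split => //.
  - exact: lam_quandle (rack_prod (rack_perm _) (quandle_rack HQ)).
  - by apply: lamM_iso => //; rewrite -Em.
apply: eqB_cons0 => //.
move: Nm Hn EX HQ; case: e {Hg} => c [X Q] /= Nm Hn EX HQ.
rewrite EX; apply: zero_quandle.
  exact: lam_quandle (rack_prod (rack_perm _) (quandle_rack HQ)).
by apply: lamM_empty => //; apply/eqP => E; apply: Nm; rewrite E.
Qed.


Lemma coef_filter (G : eqType) (P : pred (int * G)) (s : seq (int * G)) g :
  coef s g = coef (filter P s) g + coef (filter (predC P) s) g.
Proof.
elim: s => [|p s IH]; first by rewrite !coef_nil addr0.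
rewrite /= coef_cons IH; case: (P p) => /=; rewrite !coef_cons.
  by rewrite addrA.
by rewrite addrCA.
Qed.

Lemma bm_filter m' m u :
  bm m' [seq p <- u | tag p.2.1 != m] = if m' == m then [::] else bm m' u.
Proof.
rewrite /bm -filter_predI; case: eqP => [->|ne].
  rewrite (@eq_filter _ _ pred0) ?filter_pred0 // => p /=.
  by case: (tag p.2.1 == m).
congr map; apply: eq_filter => p /=.
by case: eqP => // E; rewrite /= E; apply/eqP.
Qed.

Lemma final u : good u -> (forall m, eqB QuandleRel (bm m u) [::]) -> eqB TensorRel u [::].
Proof.
move: {2}(size u) (leqnn (size u)) => k; elim: k u => [|k IH] u Hk Hg Hb.
  by case: u Hk Hg Hb => [|e u0] // _ _ _; exact: eqB_refl.
case: u Hk Hg Hb => [|e u0] Hk Hg Hb; first exact: eqB_refl.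
set u := e :: u0.
set m := tag e.2.1.
pose P := fun p : int * (permset * magma) => tag p.2.1 == m.
have Hc : forall g, coef u g = coef (filter P u ++ filter (predC P) u) g.
  by move=> g; rewrite coef_cat (coef_filter P).
apply: eqB_ext (fun g => esym (Hc g)) (fun g => erefl) _.
rewrite -[[::]]/([::] ++ [::]); apply: eqB_cat.
  have E1 : filter P u = [seq (q.1, (cyc m, q.2)) | q <- bm m u].
    rewrite /P /bm -map_comp -[LHS]map_id; apply/eq_in_map => p.
    rewrite mem_filter => /andP [/eqP Hm Hp].
    have [_ EX _] := Hg p Hp.
    by case: p Hm Hp EX => c [X Q] /= Hm _ EX; rewrite {1}EX Hm.
  rewrite E1 -lin_single -[[::]]/(lin (fun Q => [:: (1, (cyc m, Q))]) [::]).
  apply: transfer (Hb m) => r Hr; rewrite lin_single; apply: eqB_rel.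
  by right; exists (cyc m), r.
apply: IH.
- have -> : filter (predC P) u = filter (predC P) u0 by rewrite /= /P eqxx.
  by rewrite size_filter; exact: leq_trans (count_size _ u0) Hk.
- by move=> q; rewrite mem_filter => /andP [_ /Hg].
- move=> m'; rewrite (_ : filter (predC P) u = [seq p <- u | tag p.2.1 != m]) //.
  rewrite bm_filter; case: eqP => _; [exact: eqB_refl | exact: Hb].
Qed.

Lemma part4 s : tensor_gens s -> eqB RackRel (phi s) [::] -> eqB TensorRel s [::].
Proof.
move=> Hs Hp.
have [s' [Hg Hss']] := goodify Hs.
have H1 : eqB RackRel (phi s') [::] := eqB_trans (part1 (eqB_sym Hss')) Hp.
apply: eqB_trans Hss' (final Hg _) => m.
apply: eqB_trans (eqB_sym (lam_bm m Hg)) _.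
exact: (lam_transfer m H1).
Qed.

Theorem corollary7p13 :
  (forall s t, tensor_gens s -> tensor_gens t ->
     eqB TensorRel s t -> eqB RackRel (phi s) (phi t)) /\
  (forall s t, tensor_gens s -> tensor_gens t ->
     eqB RackRel (phi (fmul tprod s t)) (fmul mprod (phi s) (phi t))) /\
  eqB RackRel (phi [:: (1, (ppoint, mpoint))]) [:: (1, mpoint)] /\
  (forall s, tensor_gens s ->
     eqB RackRel (phi s) [::] -> eqB TensorRel s [::]).
Proof.
split; first by move=> s t _ _; exact: part1.
split; first exact: part2.
split; first exact: part3.
exact: part4.
Qed.
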